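(* Let $\rho$ be an $n$-qubit state and let $A_1,A_2,\dots\in\mathrm{GL}(n,2)$ be queried gauges, $A_r$ with columns $\mathbf{a}_{r,1},\dots,\mathbf{a}_{r,n}$. Let $Q_0=\emptyset$, $Q_t=\{\mathbf{a}_{r,i}:r\le t,\ i\le n\}$, $\mathcal{F}_t=\{p\in\Delta(\mathbb{F}_2^n):\widehat p(\mathbf{u})=\mu_\rho(\mathbf{u})\ \forall\mathbf{u}\in Q_t\}$, $W_t=\max_{p\in\mathcal{F}_t}p(\mathbf{0})-\min_{p\in\mathcal{F}_t}p(\mathbf{0})$, and $m_t=|(\mathbb{F}_2^n\setminus\{\mathbf{0}\})\setminus Q_t|$. (i) For every state $\rho$ and every sequence of queried gauges, $W_t\le\min\{1,\,2m_t/2^n\}$. (ii) Suppose the gauges are chosen by a randomized gauge policy (each $A_{t+1}$ drawn from a distribution depending on the history $\mathcal{H}_t$ through round $t$), and for some $\alpha\in[0,1]$, $\mathbb{P}(\mathbf{u}\in Q_{t+1}\mid\mathcal{H}_t)\ge\alpha$ for every $t\ge0$ and every $\mathbf{u}\in(\mathbb{F}_2^n\setminus\{\mathbf{0}\})\setminus Q_t$. Then $\mathbb{E}[W_t]\le\frac{2^n-1}{2^{n-1}}(1-\alpha)^t$. (iii) Under the uniform random gauge policy (each $A_{t+1}$ uniform on $\mathrm{GL}(n,2)$, independent of the history), one may take $\alpha=n/(2^n-1)$, and $$\mathbb{E}[W_t]\le\frac{2^n-1}{2^{n-1}}\Big(1-\frac{n}{2^n-1}\Big)^t\le 2\exp\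!\Big(-\frac{nt}{2^n-1}\Big).$$
   Context: Setting: $|\psi\rangle$ is an $n$-qubit stabilizer state whose stabilizer group is generated by independent commuting Pauli operators $g_1,\dots,g_n$; $g(\mathbf{u})=\prod_j g_j^{u_j}$ for $\mathbf{u}\in\mathbb{F}_2^n$. Syndrome projectors $\Pi_{\mathbf{s}}=2^{-n}\prod_j(I+(-1)^{s_j}g_j)$ are orthogonal rank-one projectors summing to identity with $\Pi_{\mathbf{0}}=|\psi\rangle\langle\psi|$. $p_\rho(\mathbf{s})=\mathrm{tr}(\rho\Pi_{\mathbf{s}})$, $\mu_\rho(\mathbf{u})=\mathrm{tr}(\rho g(\mathbf{u}))=\widehat{p_\rho}(\mathbf{u})$ with Walsh transform $\widehat p(\mathbf{u})=\sum_{\mathbf{s}}(-1)^{\mathbf{u}\cdot\mathbf{s}}p(\mathbf{s})$ (mod-2 inner product). $\Delta(\mathbb{F}_2^n)$ is the set of probability distributions on $\mathbb{F}_2^n$; $\mathrm{GL}(n,2)$ the invertible binary $n\times n$ matrices. *)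

(* Defs.v *)
From HB Require Import structures.
From mathcomp Require Import all_boot all_order all_algebra.
From mathcomp Require Import complex.
From mathcomp Require Import classical_sets reals sequences exp.
Set Implicit Arguments. Unset Strict Implicit. Unset Printing Implicit Defensive.
Import Order.TTheory GRing.Theory Num.Theory.
Local Open Scope ring_scope.
Local Open Scope classical_set_scope.

Definition vecF2 (n : nat) : finType := 'cV['F_2]_n.

Definition dotF2 n (u s : vecF2 n) : 'F_2 := (u^T *m s) 0 0.

Definition sgn_dot (K : pzRingType) n (u s : vecF2 n) : K :=
  if dotF2 u s == 0 then 1 else -1.

Definition GL2 (n : nat) : finType := {A : 'M['F_2]_n | A \in unitmx}.

Definition walsh (R : realType) n (p : vecF2 n -> R) (u : vecF2 n) : R :=
  \sum_(s : vecF2 n) sgn_dot R u s * p s.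

Definition Qset n (h : seq (GL2 n)) : {set vecF2 n} :=
  \bigcup_(A <- h) [set col i (val A) | i : 'I_n].

Definition mcount n (Q : {set vecF2 n}) : nat :=
  #|[set u : vecF2 n | u != 0] :\: Q|.

Definition cconjT (R : realType) m k (M : 'M[R[i]]_(m, k)) : 'M[R[i]]_(k, m) :=
  (map_mx (fun z => z^*) M)^T.

Definition is_state (R : realType) n (rho : 'M[R[i]]_(2 ^ n)) : Prop :=
  [/\ cconjT rho = rho,
      (forall v : 'cV[R[i]]_(2 ^ n), 0 <= ((cconjT v *m rho *m v) 0 0)) &
      \tr rho = 1].

Definition gprod (R : realType) n (g : 'I_n -> 'M[R[i]]_(2 ^ n)) (u : vecF2 n)
  : 'M[R[i]]_(2 ^ n) :=
  \prod_(j < n) (if u j 0 == 1 then g j else 1).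

Definition syndrome_proj (R : realType) n (g : 'I_n -> 'M[R[i]]_(2 ^ n)) (s : vecF2 n)
  : 'M[R[i]]_(2 ^ n) :=
  ((2 ^ n)%:R)^-1 *: \prod_(j < n) (1 + (if s j 0 == 0 then 1 else -1) *: g j).

Definition stabilizer_generators (R : realType) n (g : 'I_n -> 'M[R[i]]_(2 ^ n)) : Prop :=
  [/\ (forall j, cconjT (g j) = g j),
      (forall j, g j *m g j = 1%:M),
      (forall j k, g j *m g k = g k *m g j) &
      (forall s, \rank (syndrome_proj g s) = 1%N)].

Definition mu (R : realType) n (rho : 'M[R[i]]_(2 ^ n)) (g : 'I_n -> 'M[R[i]]_(2 ^ n))
  (u : vecF2 n) : R[i] := \tr (rho *m gprod g u).

Definition is_distr (R : realType) (T : finType) (p : T -> R) : Prop :=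
  (forall x, 0 <= p x) /\ \sum_x p x = 1.

Definition feasible (R : realType) n (rho : 'M[R[i]]_(2 ^ n))
  (g : 'I_n -> 'M[R[i]]_(2 ^ n)) (Q : {set vecF2 n}) : set (vecF2 n -> R) :=
  [set p | is_distr p /\ (forall u, u \in Q -> ((walsh p u)%:C)%C = mu rho g u)].

Definition width (R : realType) n (rho : 'M[R[i]]_(2 ^ n))
  (g : 'I_n -> 'M[R[i]]_(2 ^ n)) (Q : {set vecF2 n}) : R :=
  sup [set p 0 | p in feasible rho g Q] - inf [set p 0 | p in feasible rho g Q].

(* A policy maps a history of past gauges (most recent first) to a distribution
   on GL(n,2) for the next gauge. *)
Definition policy (R : realType) n := seq (GL2 n) -> GL2 n -> R.

Definition is_policy (R : realType) n (pol : policy R n) : Prop :=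
  forall h, is_distr (pol h).

Fixpoint hprob (R : realType) n (pol : policy R n) (h : seq (GL2 n)) : R :=
  if h is A :: h' then pol h' A * hprob pol h' else 1.

Definition expected_width (R : realType) n (pol : policy R n) (rho : 'M[R[i]]_(2 ^ n))
  (g : 'I_n -> 'M[R[i]]_(2 ^ n)) (t : nat) : R :=
  \sum_(h : t.-tuple (GL2 n)) hprob pol h * width rho g (Qset h).

Definition coverage (R : realType) n (pol : policy R n) (alpha : R) : Prop :=
  forall h : seq (GL2 n), 0 < hprob pol h ->
  forall u : vecF2 n, u != 0 -> u \notin Qset h ->
  alpha <= \sum_(A : GL2 n | u \in Qset (A :: h)) pol h A.

Definition uniform_policy (R : realType) n : policy R n :=
  fun _ _ => (#|GL2 n|%:R)^-1.

(* Main.v *)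
Require Import Defs.
From HB Require Import structures.
From mathcomp Require Import all_boot all_order all_algebra.
From mathcomp Require Import complex.
From mathcomp Require Import classical_sets reals sequences exp.
From mathcomp Require Import ring lra boolp.
Import Order.TTheory GRing.Theory Num.Theory.
Local Open Scope ring_scope.

Module Helpers.
Set Implicit Arguments. Unset Strict Implicit. Unset Printing Implicit Defensive.
Section PartA.
Local Open Scope classical_set_scope.

Lemma F2_cases (x : 'F_2) : x = 0 \/ x = 1.
Proof. case: x => [[|[|m]] Hm] //; [left|right]; exact/eqP. Qed.

Lemma card_vecF2 n : #|vecF2 n| = (2 ^ n)%N.
Proof. by rewrite /vecF2 card_mx card_Fp // muln1. Qed.

Lemma dotF2_shift n (u s : vecF2 n) k :
  dotF2 (u + delta_mx k 0) s = dotF2 u s + s k 0.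
Proof.
rewrite /dotF2 linearD /= mulmxDl mxE; congr (_ + _).
by rewrite trmx_delta -rowE mxE.
Qed.

Lemma sum_sgn (R : realType) n (s : vecF2 n) :
  \sum_(u : vecF2 n) sgn_dot R u s = if s == 0 then (2 ^ n)%:R else 0.
Proof.
case: eqP => [->|/eqP sn0].
  rewrite (eq_bigr (fun _ => 1)); last first.
    by move=> u _; rewrite /sgn_dot /dotF2 mulmx0 mxE eqxx.
  by rewrite sumr_const card_vecF2.
have [k Hk] : exists k, s k 0 = 1.
  case: (pickP (fun k => s k 0 == 1)) => [k /eqP Hk | H]; first by exists k.
  move/eqP: sn0; case; apply/matrixP => i j; rewrite !mxE (ord1 j).
  by have := H i; case: (F2_cases (s i 0)) => -> //.
set S := \sum_u _.
have : S = - S.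
  rewrite {1}/S (reindex_inj (addIr (delta_mx k 0 : vecF2 n))) /= /S -sumrN.
  apply: eq_bigr => u _; rewrite /sgn_dot dotF2_shift Hk.
  by case: (F2_cases (dotF2 u s)) => ->; rewrite ?opprK.
move=> H; have : S *+ 2 = 0 by rewrite mulr2n {1}H addNr.
by move/eqP; rewrite mulrn_eq0 /= => /eqP.
Qed.

Lemma walsh_sum (R : realType) n (p : vecF2 n -> R) :
  \sum_(u : vecF2 n) walsh p u = (2 ^ n)%:R * p 0.
Proof.
rewrite /walsh exchange_big /=.
rewrite (eq_bigr (fun s => p s * (if s == 0 then (2 ^ n)%:R else 0))); last first.
  by move=> s _; rewrite -sum_sgn mulr_sumr; apply: eq_bigr => u _; rewrite mulrC.
rewrite (bigD1 0) //= eqxx big1 ?addr0 1?mulrC // => s /negbTE ->; by rewrite mulr0.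
Qed.

Lemma walsh_le1 (R : realType) n (p : vecF2 n -> R) u :
  is_distr p -> -1 <= walsh p u <= 1.
Proof.
move=> [p0 p1]; rewrite /walsh; apply/andP; split.
  rewrite -p1 -sumrN; apply: ler_sum => s _; rewrite /sgn_dot.
  by case: ifP => _; rewrite ?mulN1r ?mul1r // ?lerN2 // ; apply: le_trans (p0 s); rewrite oppr_le0.
rewrite -p1; apply: ler_sum => s _; rewrite /sgn_dot.
by case: ifP => _; rewrite ?mulN1r ?mul1r // lerNl; apply: le_trans (p0 s); rewrite oppr_le0.
Qed.

Lemma walsh0 (R : realType) n (p : vecF2 n -> R) : is_distr p -> walsh p 0 = 1.
Proof.
move=> [_ p1]; rewrite /walsh -p1; apply: eq_bigr => s _.
by rewrite /sgn_dot /dotF2 trmx0 mul0mx mxE eqxx mul1r.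
Qed.

Lemma diff_bound (R : realType) n (Q : {set vecF2 n}) (p q : vecF2 n -> R) :
  is_distr p -> is_distr q -> (forall u, u \in Q -> walsh p u = walsh q u) ->
  p 0 - q 0 <= 2 * (mcount Q)%:R / (2 ^ n)%:R.
Proof.
move=> dp dq eqQ.
have n2 : (0 : R) < (2 ^ n)%:R by rewrite ltr0n expn_gt0.
rewrite ler_pdivlMr // mulrC mulrBr -!walsh_sum -sumrB.
set S := [set u : vecF2 n | u != 0] :\: Q.
rewrite (bigID (fun u => u \in S)) /= [X in _ + X]big1 ?addr0; last first.
  move=> u; rewrite !inE negb_and !negbK; case/orP => [uQ | /eqP ->]; last by rewrite !walsh0 // subrr.
  by rewrite (eqQ u uQ) subrr.
apply: (@le_trans _ _ (\sum_(u in S) (2 : R))).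
  apply: ler_sum => u _.
  have := walsh_le1 u dp; have := walsh_le1 u dq; move=> /andP[a b] /andP[c d]; lra.
by rewrite sumr_const /mcount -/S mulr_natr.
Qed.

Lemma distr_le1 (R : realType) (T : finType) (p : T -> R) x : is_distr p -> p x <= 1.
Proof.
move=> [p0 p1]; rewrite -p1 (bigD1 x) //= lerDl; apply: sumr_ge0 => y _; exact: p0.
Qed.

Lemma width_bound (R : realType) n (rho : 'M[R[i]]_(2 ^ n))
  (g : 'I_n -> 'M[R[i]]_(2 ^ n)) (Q : {set vecF2 n}) :
  width rho g Q <= Num.min 1 (2 * (mcount Q)%:R / (2 ^ n)%:R).
Proof.
set B := Num.min _ _.
have B0 : 0 <= B.
  rewrite le_min ler01 /= divr_ge0 // ?ler0n // mulr_ge0 // ler0n.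
rewrite /width; set E := (X in sup X); change (sup E - inf E <= B).
have pair : forall x y, E x -> E y -> x - y <= B.
  move=> _ _ [p [dp fp] <-] [q [dq fq] <-].
  rewrite le_min; apply/andP; split.
    have := distr_le1 0 dp; have := (dq.1 0); lra.
  apply: diff_bound => // u uQ.
  have := congr1 (@complex.Re R) (fp u uQ); have := congr1 (@complex.Re R) (fq u uQ).
  by rewrite /= => -> ->.
case: (pselect (E !=set0)) => [En | E0]; last first.
  have -> : E = set0 by apply/seteqP; split => x // Ex; apply: E0; exists x.
  by rewrite sup0 inf0 subrr.
have H1 : forall y, E y -> sup E <= B + y.
  move=> y Ey; apply: ge_sup => // x Ex; have := pair x y Ex Ey; lra.
have : sup E - B <= inf E.
  apply: lb_le_inf => // y Ey; have := H1 y Ey; lra.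
lra.
Qed.

End PartA.

Lemma sum_tupleS (R : realType) (T : finType) t (F : seq T -> R) :
  \sum_(h : t.+1.-tuple T) F h = \sum_(h : t.-tuple T) \sum_(A : T) F (A :: h).
Proof.
rewrite pair_big /=.
rewrite (reindex (fun x : t.-tuple T * T => [tuple of x.2 :: x.1])) //=.
exists (fun h : t.+1.-tuple T => (behead_tuple h, thead h)).
  by move=> [h A] _ /=; congr (_, _); apply: val_inj.
by move=> h _ /=; rewrite [RHS]tuple_eta; apply: val_inj.
Qed.

Lemma sum_tuple0 (R : realType) (T : finType) (F : seq T -> R) :
  \sum_(h : 0.-tuple T) F h = F [::].
Proof.
rewrite (big_pred1 [tuple]) // => h /=; symmetry; apply/eqP; exact: tuple0.
Qed.

Lemma hprob_ge0 (R : realType) n (pol : policy R n) h :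
  is_policy pol -> 0 <= hprob pol h.
Proof.
move=> ip; elim: h => [|A h IH] /=; first exact: ler01.
by apply: mulr_ge0 => //; exact: (ip h).1.
Qed.

Lemma Qset_cons n (A : GL2 n) h : Qset (A :: h) = [set col i (val A) | i : 'I_n] :|: Qset h.
Proof. by rewrite /Qset big_cons. Qed.

Definition fmiss (R : realType) n (pol : policy R n) t (u : vecF2 n) : R :=
  \sum_(h : t.-tuple (GL2 n)) hprob pol h * (u \notin Qset h)%:R.

Lemma fmiss_step (R : realType) n (pol : policy R n) alpha t u :
  is_policy pol -> coverage pol alpha -> u != 0 ->
  fmiss pol t.+1 u <= (1 - alpha) * fmiss pol t u.
Proof.
move=> ip cov u0; rewrite /fmiss (@sum_tupleS R (GL2 n) t (fun h : seq (GL2 n) => hprob pol h * (u \notin Qset h)%:R)) mulr_sumr; apply: ler_sum => h _ /=.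
rewrite (eq_bigr (fun A => hprob pol h * (pol h A * (u \notin Qset (A :: h))%:R)));
  last by move=> A _; rewrite mulrCA mulrA [pol h A * _]mulrC -mulrA.
rewrite -mulr_sumr mulrCA.
have [hp0|hpos] := eqVneq (hprob pol h) 0; first by rewrite hp0 !mul0r.
apply: ler_wpM2l; first exact: hprob_ge0.
have [uQ|uQ] := boolP (u \in Qset h).
  rewrite /= mulr0 big1 // => A _; by rewrite Qset_cons inE uQ orbT mulr0.
have hpos' : 0 < hprob pol h by rewrite lt0r hpos hprob_ge0.
have c := cov h hpos' u u0 uQ.
have e1 : 1 = \sum_(A | u \in Qset (A :: h)) pol h A + \sum_(A | u \notin Qset (A :: h)) pol h A.
  by rewrite -(ip h).2 (bigID (fun A => u \in Qset (A :: h))).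
have -> : \sum_A pol h A * (u \notin Qset (A :: h))%:R =
          \sum_(A | u \notin Qset (A :: h)) pol h A.
  rewrite [RHS]big_mkcond; apply: eq_bigr => A _; by case: ifP => _; rewrite ?mulr1 ?mulr0.
rewrite mulr1; lra.
Qed.

Lemma fmiss_bound (R : realType) n (pol : policy R n) alpha t u :
  is_policy pol -> 0 <= alpha <= 1 -> coverage pol alpha -> u != 0 ->
  fmiss pol t u <= (1 - alpha) ^+ t.
Proof.
move=> ip /andP[a0 a1] cov u0; elim: t => [|t IH].
  rewrite /fmiss (@sum_tuple0 R (GL2 n) (fun h => hprob pol h * (u \notin Qset h)%:R)).
  by rewrite /= /Qset big_nil inE mul1r expr0.
apply: le_trans (fmiss_step t ip cov u0) _.
rewrite exprS; apply: ler_wpM2l => //; lra.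
Qed.

Lemma mcount_sum (R : realType) n (Q : {set vecF2 n}) :
  (mcount Q)%:R = \sum_(u : vecF2 n | u != 0) (u \notin Q)%:R :> R.
Proof.
rewrite /mcount -sum1_card natr_sum big_mkcond [RHS]big_mkcond /=.
apply: eq_bigr => u _; rewrite !inE.
by case: (u \in Q); case: (u != 0).
Qed.

Lemma card_nonzero n : #|[pred u : vecF2 n | u != 0]| = (2 ^ n - 1)%N.
Proof. by rewrite (cardC1 (0 : vecF2 n)) card_vecF2 subn1. Qed.

Lemma part2 (R : realType) n (rho : 'M[R[i]]_(2 ^ n)) (g : 'I_n -> 'M[R[i]]_(2 ^ n))
  (pol : policy R n) (alpha : R) :
  is_policy pol -> 0 <= alpha <= 1 -> coverage pol alpha ->
  forall t : nat,
    expected_width pol rho g t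
      <= (2 ^ n - 1)%:R / (2 ^ n.-1)%:R * (1 - alpha) ^+ t.
Proof.
move=> ip ha cov t.
have n2 : (0 : R) < (2 ^ n)%:R by rewrite ltr0n expn_gt0.
apply: (@le_trans _ _ (\sum_(h : t.-tuple (GL2 n))
     hprob pol h * (2 * (mcount (Qset h))%:R / (2 ^ n)%:R))).
  apply: ler_sum => h _; apply: ler_wpM2l; first exact: hprob_ge0.
  apply: le_trans (width_bound rho g (Qset h)) _; by rewrite ge_min lexx orbT.
have -> : \sum_(h : t.-tuple (GL2 n)) hprob pol h * (2 * (mcount (Qset h))%:R / (2 ^ n)%:R)
   = 2 / (2 ^ n)%:R * \sum_(u : vecF2 n | u != 0) fmiss pol t u.
  rewrite /fmiss exchange_big /= mulr_sumr; apply: eq_bigr => h _.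
  rewrite mcount_sum -mulr_sumr; ring.

have ha' : 0 <= 1 - alpha by case/andP: ha => _ a1; lra.
apply: (@le_trans _ _ (2 / (2 ^ n)%:R * ((2 ^ n - 1)%:R * (1 - alpha) ^+ t))).
  apply: ler_wpM2l; first by rewrite divr_ge0 // ltW.
  apply: (@le_trans _ _ (\sum_(u : vecF2 n | u != 0) (1 - alpha) ^+ t)).
    by apply: ler_sum => u u0; exact: fmiss_bound.
  by rewrite sumr_const card_nonzero mulr_natl.
clear -n2 ha ha'; case: n n2 => [|n] n2; first by rewrite expn0 subnn !mul0r mulr0.
rewrite mulrA; apply: ler_wpM2r; first exact: exprn_ge0.
rewrite /= expnS natrM.

by rewrite invfM mulrA divff ?mul1r 1?mulrC // pnatr_eq0.
Qed.

Lemma unit_ker n (A : 'M['F_2]_n) (x : vecF2 n) : A \in unitmx -> A *m x = 0 -> x = 0.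
Proof. by move=> uA Ax; rewrite -(mulKmx uA x) Ax mulmx0. Qed.

Lemma GL_col_neq0 n (A : GL2 n) i : col i (val A) != 0.
Proof.
apply/eqP; rewrite colE => /(unit_ker (valP A)) /matrixP /(_ i 0).
by rewrite !mxE !eqxx.
Qed.

Lemma GL_col_inj n (A : GL2 n) i j : col i (val A) = col j (val A) -> i = j.
Proof.
move=> e; apply/eqP; apply: contraT => ij.
have : val A *m (delta_mx i 0 - delta_mx j 0 : 'cV['F_2]_n) = 0 by rewrite mulmxBr -!colE e subrr.
move/(unit_ker (valP A)) /matrixP /(_ i 0).
rewrite !mxE !eqxx /=; move: ij; case: eqP => // _ _; rewrite subr0 => /eqP; by rewrite oner_eq0.
Qed.

Lemma ebase_vec n (u : vecF2 n) : u != 0 ->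
  exists2 L : 'M['F_2]_n, L \in unitmx & u = L *m pid_mx 1.
Proof.
move=> u0; exists (col_ebase u); first exact: col_ebase_unit.
have r1 : \rank u = 1%N.
  apply/eqP; rewrite eqn_leq rank_leq_col lt0n mxrank_eq0 //.
have rb : row_ebase u = 1%:M.
  have := row_ebase_unit u; rewrite [row_ebase u]mx11_scalar unitmxE det_scalar1.
  by case: (F2_cases (row_ebase u 0 0)) => -> //; rewrite unitr0.
by rewrite -{1}(mulmx_ebase u) r1 rb mulmx1.
Qed.

Lemma transitive_GL n (u v : vecF2 n) : u != 0 -> v != 0 ->
  exists2 M : 'M['F_2]_n, M \in unitmx & M *m u = v.
Proof.
move=> /ebase_vec [Lu uLu eu] /ebase_vec [Lv uLv ev].
exists (Lv *m invmx Lu); first by rewrite unitmx_mul uLv unitmx_inv.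
by rewrite eu mulmxA mulmxKV // -ev.
Qed.

Definition Sc n (i : 'I_n) (u : vecF2 n) : {set GL2 n} :=
  [set A : GL2 n | col i (val A) == u].

Lemma cardS_le n i (u v : vecF2 n) : u != 0 -> v != 0 -> (#|Sc i u| <= #|Sc i v|)%N.
Proof.
move=> u0 v0; have [M uM Mu] := transitive_GL u0 v0.
pose f (A : GL2 n) : GL2 n := exist _ (M *m val A) (etrans (unitmx_mul M (val A)) (introT andP (conj uM (valP A)))).
have finj : injective f.
  move=> A B /(congr1 val) /= e; apply: val_inj; by rewrite -(mulKmx uM (val A)) e mulKmx.
rewrite -(card_imset (Sc i u) finj); apply: subset_leq_card; apply/fintype.subsetP => y /imsetP [A + ->].
rewrite !inE => /eqP cA; apply/eqP; change (col i (M *m val A) = v); by rewrite colE -mulmxA -colE cA Mu.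
Qed.

Lemma sumSc n (i : 'I_n) : (\sum_(v : vecF2 n) #|Sc i v|)%N = #|GL2 n|.
Proof.
transitivity (\sum_(A : GL2 n) 1)%N; last by rewrite sum1_card.
rewrite (eq_bigr (fun v => \sum_(A : GL2 n) (col i (val A) == v : nat))%N); last first.
  move=> v _; rewrite -sum1_card big_mkcond /=; apply: eq_bigr => A _.
  by rewrite inE; case: eqP.
rewrite exchange_big /=; apply: eq_bigr => A _.
rewrite (bigD1 (col i (val A))) //= eqxx big1 // => v /negbTE.
by rewrite eq_sym => ->.
Qed.

Lemma cardSc n (i : 'I_n) (u : vecF2 n) : u != 0 ->
  ((2 ^ n - 1) * #|Sc i u|)%N = #|GL2 n|.
Proof.
move=> u0; rewrite -(sumSc i) (bigD1 0) //=.
have -> : #|Sc i 0| = 0%N.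
  apply/eqP; rewrite cards_eq0; apply/eqP/setP => A; rewrite !inE.
  by rewrite (negbTE (GL_col_neq0 A i)).
rewrite add0n (eq_bigr (fun _ => #|Sc i u|)); last first.
  by move=> v v0; apply/eqP; rewrite eqn_leq !cardS_le.
by rewrite sum_nat_const card_nonzero.
Qed.

Lemma uniform_policyE (R : realType) n h A :
  @uniform_policy R n h A = (#|GL2 n|%:R)^-1.
Proof. by rewrite /uniform_policy card.unlock. Qed.

Lemma GL_card_gt0 n : (0 < #|GL2 n|)%N.
Proof.
apply/card_gt0P; exists (exist _ (1%:M : 'M['F_2]_n) (unitmx1 _ _)); by [].
Qed.

Lemma uniform_is_policy (R : realType) n : is_policy (@uniform_policy R n).
Proof.
move=> h; split => [A|]; first by rewrite uniform_policyE invr_ge0 ler0n.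
rewrite (eq_bigr (fun _ => (#|GL2 n|%:R : R)^-1)); last by move=> A _; rewrite uniform_policyE.
rewrite sumr_const (_ : #|[pred _ : GL2 n | true]| = #|GL2 n|) // -[LHS]mulr_natr mulVf // pnatr_eq0 -lt0n.
exact: GL_card_gt0.
Qed.


Lemma cardSc_sum n (i : 'I_n) (u : vecF2 n) :
  #|Sc i u| = (\sum_(A : GL2 n) (col i (val A) == u : nat))%N.
Proof.
rewrite -sum1_card big_mkcond /=; apply: eq_bigr => A _.
by rewrite inE; case: eqP.
Qed.

Lemma uniform_coverage (R : realType) n :
  coverage (@uniform_policy R n) (n%:R / (2 ^ n - 1)%:R).
Proof.
move=> h _ u u0 uQ.
rewrite (eq_bigr (fun _ => (#|GL2 n|%:R : R)^-1)); last by move=> A _; rewrite uniform_policyE.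
set N := #|GL2 n|.
have N0 : (N%:R : R) != 0 by rewrite pnatr_eq0 -lt0n GL_card_gt0.
apply: (@le_trans _ _ (\sum_(A : GL2 n) N%:R^-1 * (\sum_(i < n) (col i (val A) == u : nat))%:R)).
  rewrite -mulr_sumr -natr_sum exchange_big /=.
  rewrite (eq_bigr (fun i => #|Sc i u|)); last by move=> i _; rewrite cardSc_sum.
  rewrite natr_sum.
  have [n0|npos] := posnP n.
    move/eqP: u0 => H; exfalso; apply: H; apply/matrixP => i j; by have := ltn_ord i; rewrite {2}n0.
  set d := (2 ^ n - 1)%N.
  have d0 : (d%:R : R) != 0.
    rewrite pnatr_eq0; apply/eqP => d0; move: (cardSc (Ordinal npos) u0).
    rewrite -/d d0 mul0n => /esym N0'.
    by have := GL_card_gt0 n; rewrite lt0n => /eqP; apply.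
  rewrite (eq_bigr (fun _ => N%:R / d%:R)); last first.
    move=> i _; have := cardSc i u0; rewrite -/d -/N => <-.
    by rewrite natrM mulrC mulKf.
  rewrite sumr_const (_ : #|[pred _ : 'I_n | true]| = n) ?card_ord //.
  rewrite -[X in _ <= _ * X]mulr_natr.
  suff -> : N%:R^-1 * (N%:R / d%:R * n%:R) = n%:R / d%:R :> R by [].
  field.
  by rewrite N0 d0.
rewrite [X in _ <= X]big_mkcond /=; apply: ler_sum => A _.
case: (pickP (fun i => col i (val A) == u)) => [i0 /eqP c0 | none].
  have -> : u \in Qset (A :: h).
    by rewrite Qset_cons inE; apply/orP; left; apply/imsetP; exists i0.
  rewrite (bigD1 i0) //= big1 ?c0 ?eqxx ?addn0 ?mulr1 // => j ji0.
  case: eqP => // cj; case/eqP: ji0; apply: (GL_col_inj (A := A)); exact: (etrans cj (esym c0)).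
rewrite big1 ?mulr0; last by move=> i _; rewrite none.
by case: ifP => // _; rewrite invr_ge0 ler0n.
Qed.

Lemma exp_bound (R : realType) (n t : nat) :
  (2 ^ n - 1)%:R / (2 ^ n.-1)%:R * (1 - n%:R / (2 ^ n - 1)%:R) ^+ t
       <= 2 * expR (- ((n * t)%:R / (2 ^ n - 1)%:R)) :> R.
Proof.
set d := (2 ^ n - 1)%N; set x : R := n%:R / d%:R.
have x0 : 0 <= x by rewrite divr_ge0 // ler0n.
have x1 : x <= 1.
  have [d0|dpos] := posnP d; first by rewrite /x d0 invr0 mulr0 ler01.
  rewrite ler_pdivrMr ?ltr0n // mul1r ler_nat /d.
  by rewrite -ltnS subn1 prednK ?expn_gt0 // ltn_expl.
have c0 : 0 <= (d%:R : R) / (2 ^ n.-1)%:R by rewrite divr_ge0 // ler0n.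
have c2 : (d%:R : R) / (2 ^ n.-1)%:R <= 2.
  rewrite ler_pdivrMr ?ltr0n ?expn_gt0 // -natrM ler_nat /d; clear.
  case: n => [|n]; first by rewrite expn0. by rewrite /= expnS leq_subr.
apply: ler_pM => //; first by apply: exprn_ge0; lra.
have -> : - ((n * t)%:R / d%:R) = - x * t%:R :> R by rewrite natrM /x; ring.
rewrite expRM_natr; apply: lerXn2r; rewrite ?nnegrE ?expR_ge0 //; first lra.
have := expR_ge1Dx (- x); lra.
Qed.

Lemma x01 (R : realType) (n : nat) : 0 <= (n%:R / (2 ^ n - 1)%:R : R) <= 1.
Proof.
set d := (2 ^ n - 1)%N; apply/andP; split; first by rewrite divr_ge0 // ler0n.
have [d0|dpos] := posnP d; first by rewrite d0 invr0 mulr0 ler01.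
rewrite ler_pdivrMr ?ltr0n // mul1r ler_nat /d.
by rewrite -ltnS subn1 prednK ?expn_gt0 // ltn_expl.
Qed.
End Helpers.
Import Helpers.

Theorem proposition7 (R : realType) (n : nat)
  (rho : 'M[R[i]]_(2 ^ n)) (g : 'I_n -> 'M[R[i]]_(2 ^ n)) :
  is_state rho -> stabilizer_generators g ->
  (* (i) *)
  (forall h : seq (GL2 n),
     width rho g (Qset h) <= Num.min 1 (2 * (mcount (Qset h))%:R / (2 ^ n)%:R)) /\
  (* (ii) *)
  (forall (pol : policy R n) (alpha : R),
     is_policy pol -> 0 <= alpha <= 1 -> coverage pol alpha ->
     forall t : nat,
       expected_width pol rho g t
         <= (2 ^ n - 1)%:R / (2 ^ n.-1)%:R * (1 - alpha) ^+ t) /\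
  (* (iii) *)
  (is_policy (@uniform_policy R n) /\
   coverage (@uniform_policy R n) (n%:R / (2 ^ n - 1)%:R) /\
   forall t : nat,
     expected_width (@uniform_policy R n) rho g t
       <= (2 ^ n - 1)%:R / (2 ^ n.-1)%:R * (1 - n%:R / (2 ^ n - 1)%:R) ^+ t /\
     (2 ^ n - 1)%:R / (2 ^ n.-1)%:R * (1 - n%:R / (2 ^ n - 1)%:R) ^+ t
       <= 2 * expR (- ((n * t)%:R / (2 ^ n - 1)%:R)) :> R).
Proof.
move=> _ _; split; first by move=> h; exact: width_bound.
split; first by move=> pol alpha ip ha cov t; exact: part2.
split; first exact: uniform_is_policy.
split; first exact: uniform_coverage.
move=> t; split; last exact: exp_bound.
apply: part2; [exact: uniform_is_policy | exact: x01 | exact: uniform_coverage].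
Qed.
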